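(* There is $N$ such that for every $n\ge N$ the following holds. Let $R(x)=(2n-1)T_{2n+1}(x)+(2n+1)T_{2n-1}(x)$. For every positive root $\zeta$ of $U'_{2n-1}$ other than the smallest positive root, $R$ has a root in the interval $\left[\zeta-\frac{2}{5n^2\zeta},\ \zeta\right)$.
   Context: $T_m,U_m$ are Chebyshev polynomials of the first and second kind: $T_m(\cos\theta)=\cos m\theta$, $U_m(\cos\theta)=\sin((m+1)\theta)/\sin\theta$. *)

(* Defs.v *)
From Stdlib Require Import Reals Lra Lia.
Open Scope R_scope.

(* Chebyshev polynomials (as real functions), via the standard recurrence;
   they satisfy T_m(cos t) = cos(m t), U_m(cos t) = sin((m+1)t)/sin t. *)
Fixpoint cheb_pair (m : nat) (x : R) : R * R :=
  match m with
  | O => (1, x)                       (* (T_0, T_1) *)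
  | S k => let (a, b) := cheb_pair k x in (b, 2 * x * b - a)
  end.
Definition chebT (m : nat) (x : R) : R := fst (cheb_pair m x).

Fixpoint chebU_pair (m : nat) (x : R) : R * R :=
  match m with
  | O => (1, 2 * x)                   (* (U_0, U_1) *)
  | S k => let (a, b) := chebU_pair k x in (b, 2 * x * b - a)
  end.
Definition chebU (m : nat) (x : R) : R := fst (chebU_pair m x).

Definition is_root_dU (m : nat) (z : R) : Prop :=
  derivable_pt_lim (chebU m) z 0.

Definition Rpoly (n : nat) (x : R) : R :=
  (2 * INR n - 1) * chebT (2 * n + 1) x + (2 * INR n + 1) * chebT (2 * n - 1) x.

(* Main.v *)
Require Import Defs.
From Stdlib Require Import Reals Lra Lia Psatz FunctionalExtensionality.
Open Scope R_scope.

Fixpoint U2 (m : nat) (x : R) : R :=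
  match m with
  | O => 1
  | S O => 2 * x
  | S ((S k) as k') => 2 * x * U2 k' x - U2 k x
  end.
Fixpoint dU2 (m : nat) (x : R) : R :=
  match m with
  | O => 0
  | S O => 2
  | S ((S k) as k') => 2 * U2 k' x + 2 * x * dU2 k' x - dU2 k x
  end.

Lemma U2_SS m x : U2 (S (S m)) x = 2 * x * U2 (S m) x - U2 m x.
Proof. reflexivity. Qed.
Lemma dU2_SS m x : dU2 (S (S m)) x = 2 * U2 (S m) x + 2 * x * dU2 (S m) x - dU2 m x.
Proof. reflexivity. Qed.

Lemma chebU_pair_eq m x : chebU_pair m x = (U2 m x, U2 (S m) x).
Proof.
  induction m as [|m IH]; [reflexivity|].
  simpl chebU_pair. rewrite IH. reflexivity.
Qed.

Lemma chebU_eq m : chebU m = U2 m.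
Proof. apply functional_extensionality; intro x. unfold chebU. now rewrite chebU_pair_eq. Qed.

Lemma U2_deriv m x : derivable_pt_lim (U2 m) x (dU2 m x) /\ derivable_pt_lim (U2 (S m)) x (dU2 (S m) x).
Proof.
  induction m as [|m [IH1 IH2]].
  - split.
    + simpl. apply derivable_pt_lim_const.
    + simpl. assert (H := derivable_pt_lim_scal id 2 x 1 (derivable_pt_lim_id x)). rewrite Rmult_1_r in H. exact H.
  - split; [exact IH2|].
    assert (E : U2 (S (S m)) = fun y => 2 * y * U2 (S m) y - U2 m y).
    { apply functional_extensionality; intro; reflexivity. }
    rewrite E, dU2_SS.
    replace (2 * U2 (S m) x + 2 * x * dU2 (S m) x - dU2 m x)
      with ((2 * 1 * U2 (S m) x + 2 * x * dU2 (S m) x) - dU2 m x) by ring.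
    apply (derivable_pt_lim_minus (fun y => 2 * y * U2 (S m) y) (U2 m)); [|exact IH1].
    apply (derivable_pt_lim_mult (fun y => 2 * y) (U2 (S m))); [|exact IH2].
    exact (derivable_pt_lim_scal id 2 x 1 (derivable_pt_lim_id x)).
Qed.

Lemma dU2_identity j x :
  (1 - x^2) * dU2 (S j) x = (INR j + 2) * U2 j x - (INR j + 1) * x * U2 (S j) x /\
  (1 - x^2) * dU2 (S (S j)) x = (INR (S j) + 2) * U2 (S j) x - (INR (S j) + 1) * x * U2 (S (S j)) x.
Proof.
  induction j as [|j [IH1 IH2]].
  - simpl. split; ring.
  - split; [exact IH2|].
    rewrite (dU2_SS (S j)), (U2_SS (S j)).
    replace ((1 - x ^ 2) * (2 * U2 (S (S j)) x + 2 * x * dU2 (S (S j)) x - dU2 (S j) x))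
      with (2*(1-x^2)*U2 (S (S j)) x + 2*x*((1-x^2)*dU2 (S(S j)) x) - (1-x^2)*dU2 (S j) x) by ring.
    rewrite IH2, IH1, (U2_SS j). rewrite !S_INR. ring.
Qed.

Lemma U2_cos m t : U2 m (cos t) * sin t = sin ((INR m + 1) * t) /\
                   U2 (S m) (cos t) * sin t = sin ((INR m + 2) * t).
Proof.
  induction m as [|m [IH1 IH2]].
  - simpl. split.
    + replace ((0+1)*t) with t by ring. ring.
    + replace ((0+2)*t) with (t + t) by ring. rewrite sin_plus. ring.
  - split; [rewrite S_INR; replace (INR m + 1 + 1) with (INR m + 2) by ring; exact IH2|].
    rewrite U2_SS, S_INR.
    replace ((2 * cos t * U2 (S m) (cos t) - U2 m (cos t)) * sin t)
      with (2 * cos t * (U2 (S m) (cos t) * sin t) - U2 m (cos t) * sin t) by ring.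
    rewrite IH1, IH2.
    replace ((INR m + 1 + 2) * t) with ((INR m + 2) * t + t) by ring.
    replace ((INR m + 1) * t) with ((INR m + 2) * t - t) by ring.
    rewrite sin_plus, sin_minus. ring.
Qed.

Lemma cheb_pair_cos m t : cheb_pair m (cos t) = (cos (INR m * t), cos ((INR m + 1) * t)).
Proof.
  induction m as [|m IH].
  - simpl. f_equal; [rewrite Rmult_0_l, cos_0|f_equal]; ring.
  - simpl cheb_pair. rewrite IH. rewrite S_INR. f_equal.
    replace ((INR m + 1 + 1) * t) with ((INR m + 1) * t + t) by ring.
    replace (cos (INR m * t)) with (cos ((INR m + 1) * t - t)) by (f_equal; ring).
    rewrite cos_plus, cos_minus. ring.
Qed.

Lemma chebT_cos m t : chebT m (cos t) = cos (INR m * t).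
Proof. unfold chebT. now rewrite cheb_pair_cos. Qed.

Lemma dU2_pos x : 1 <= x -> forall m, 0 < dU2 (S m) x.
Proof.
  intros Hx m.
  assert (H : forall m, 1 <= U2 m x <= U2 (S m) x /\ 0 <= dU2 m x <= dU2 (S m) x /\ 2 <= dU2 (S m) x).
  { induction m0 as [|m0 [[Ha Hb] [[Hc Hd] He]]].
    - simpl. lra.
    - rewrite U2_SS, dU2_SS. repeat split; try lra; nra. }
  destruct (H m) as [_ [_ He]]. lra.
Qed.

Lemma sin_cubic a : 0 <= a -> a <= PI -> a - a^3/6 <= sin a.
Proof.
  intros H1 H2. destruct (sin_bound a 0 H1 H2) as [H _].
  unfold sin_approx, sin_term in H. simpl in H. lra.
Qed.

Lemma cos_quad a : - PI / 2 <= a -> a <= PI / 2 -> 1 - a^2/2 <= cos a.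
Proof.
  intros H1 H2. destruct (cos_bound a 0 H1 H2) as [H _].
  unfold cos_approx, cos_term in H. simpl in H. lra.
Qed.

Lemma PI_gt3 : 3 < PI.
Proof. pose proof PI2_3_2; lra. Qed.

Lemma Ksin_lb K phi A : 32 <= K -> 0 < phi -> phi <= PI/2 -> A <= K * phi -> 0 < A <= 6 ->
  99/100 * A <= K * sin phi.
Proof.
  intros HK H1 H2 H3 HA. pose proof PI_4. pose proof PI_gt3.
  assert (Hs := sin_cubic phi ltac:(lra) ltac:(lra)).
  destruct (Rle_dec phi (2/10)) as [Hp|Hp].
  - assert (Hq : 99/100 <= 1 - phi^2/6) by nra.
    assert (K * sin phi >= (K * phi) * (1 - phi^2/6)) by nra.
    assert ((K * phi) * (1 - phi^2/6) >= A * (99/100)) by nra. lra.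
  - assert (0 <= (phi - 2/10) * (2 - phi) * (phi + 22/10)) by
      (apply Rmult_le_pos; [apply Rmult_le_pos|]; lra).
    assert (phi - phi^3/6 >= 19/100) by nra. nra.
Qed.

Definition psi (K t : R) : R := K * t - atan (K * tan t).

Lemma psi_deriv K t : -PI/2 < t < PI/2 ->
  derivable_pt_lim (psi K) t (K - / (1 + (K * tan t)^2) * (K * (1 + (tan t)^2))).
Proof.
  intros Ht.
  assert (Htan : derivable_pt_lim tan t (1 + (tan t)^2)).
  { apply derive_pt_eq_1 with (derivable_pt_tan t Ht). apply derive_pt_tan. }
  assert (H1 : derivable_pt_lim (fun y => K * tan y) t (K * (1 + (tan t)^2))).
  { exact (derivable_pt_lim_scal tan K t _ Htan). }
  assert (H2 : derivable_pt_lim (fun y => atan (K * tan y)) t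
                (/ (1 + (K * tan t)^2) * (K * (1 + (tan t)^2)))).
  { apply (derivable_pt_lim_comp (fun y => K * tan y) atan). exact H1. apply derivable_pt_lim_atan. }
  unfold psi.
  apply (derivable_pt_lim_minus (fun y => K * y) (fun y => atan (K * tan y))); [|exact H2].
  assert (H := derivable_pt_lim_scal id K t 1 (derivable_pt_lim_id t)). rewrite Rmult_1_r in H. exact H.
Qed.

Lemma psi_incr K a b : 1 < K -> 0 <= a -> a < b -> b < PI/2 -> psi K a < psi K b.
Proof.
  intros HK Ha Hab Hb. pose proof PI_RGT_0.
  destruct (MVT_cor2 (psi K) (fun t => K - / (1 + (K * tan t)^2) * (K * (1 + (tan t)^2))) a b Hab)
    as [c [Hc1 Hc2]].
  { intros c Hc. apply psi_deriv. lra. }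
  assert (Ht : 0 < tan c) by (apply tan_gt_0; lra).
  assert (Hpos : 0 < K - / (1 + (K * tan c)^2) * (K * (1 + (tan c)^2))).
  { set (u := tan c) in *.
    assert (Hd : 0 < 1 + (K*u)^2) by (pose proof (pow2_ge_0 (K*u)); lra).
    assert (E : K - / (1 + (K * u)^2) * (K * (1 + u^2)) = K * (K^2 - 1) * u^2 / (1 + (K*u)^2)).
    { field. lra. }
    rewrite E. apply Rdiv_lt_0_compat; [|exact Hd].
    apply Rmult_lt_0_compat; [apply Rmult_lt_0_compat; nra|]. nra. }
  assert (0 < psi K b - psi K a) by (rewrite Hc1; apply Rmult_lt_0_compat; lra). lra.
Qed.

Lemma psi_0 K : psi K 0 = 0.
Proof. unfold psi. rewrite tan_0, Rmult_0_r, atan_0. ring. Qed.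

Lemma atan_pos x : 0 < x -> 0 < atan x.
Proof. intros. rewrite <- atan_0. apply atan_increasing. exact H. Qed.

Lemma root_psi K t : 0 < t < PI/2 -> sin (K * t) * cos t = K * cos (K * t) * sin t ->
  exists z : Z, psi K t = IZR z * PI.
Proof.
  intros Ht Hr. apply sin_eq_0_0. unfold psi.
  set (al := atan (K * tan t)).
  assert (Hb := atan_bound (K * tan t)). fold al in Hb.
  assert (Hca : 0 < cos al) by (apply cos_gt_0; lra).
  assert (Hct : 0 < cos t) by (apply cos_gt_0; lra).
  assert (Htan := tan_atan (K * tan t)). fold al in Htan.
  unfold tan in Htan.
  assert (Hsa : sin al = K * (sin t / cos t) * cos al).
  { rewrite <- Htan. field. lra. }
  rewrite sin_minus, Hsa.
  replace (sin (K * t) * cos al - cos (K * t) * (K * (sin t / cos t) * cos al))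
    with (cos al / cos t * (sin (K * t) * cos t - K * cos (K * t) * sin t)) by (field; lra).
  rewrite Hr. ring.
Qed.

Lemma root_bounds (n : nat) K t0 tz : K = 2 * INR n -> 1 < K ->
  0 < t0 -> t0 < tz -> tz < PI/2 ->
  sin (K * t0) * cos t0 = K * cos (K * t0) * sin t0 ->
  sin (K * tz) * cos tz = K * cos (K * tz) * sin tz ->
  PI < K * t0 /\ 3 * PI / 2 < K * (PI/2 - t0).
Proof.
  intros HK HK1 H0 H0z Hz R0 Rz. pose proof PI_RGT_0.
  destruct (root_psi K t0 ltac:(lra) R0) as [z1 Hz1].
  destruct (root_psi K tz ltac:(lra) Rz) as [z2 Hz2].
  assert (P0 := psi_incr K 0 t0 HK1 ltac:(lra) H0 ltac:(lra)).
  assert (P1 := psi_incr K t0 tz HK1 ltac:(lra) H0z Hz).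
  rewrite psi_0 in P0. rewrite Hz1 in P0, P1. rewrite Hz2 in P1.
  assert (Hz1pos : (0 < z1)%Z).
  { apply lt_IZR. simpl. apply Rmult_lt_reg_r with PI; lra. }
  assert (Hz12 : (z1 < z2)%Z).
  { apply lt_IZR. apply Rmult_lt_reg_r with PI; lra. }
  assert (Ht0 : 0 < tan t0) by (apply tan_gt_0; lra).
  assert (Htz : 0 < tan tz) by (apply tan_gt_0; lra).
  assert (A0 := atan_pos (K * tan t0) ltac:(nra)).
  assert (Az := atan_pos (K * tan tz) ltac:(nra)).
  assert (B0 := atan_bound (K * tan t0)).
  unfold psi in Hz1, Hz2.
  assert (Hz2n : (z2 < Z.of_nat n)%Z).
  { apply lt_IZR. rewrite <- INR_IZR_INZ.
    apply Rmult_lt_reg_r with PI; [lra|].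
    assert (K * tz < K * (PI/2)) by (apply Rmult_lt_compat_l; lra). nra. }
  assert (E1 : 1 <= IZR z1) by (apply IZR_le; lia).
  assert (E2 : IZR z1 <= INR n - 2).
  { rewrite INR_IZR_INZ. replace 2 with (IZR 2) by reflexivity.
    rewrite <- minus_IZR. apply IZR_le. lia. }
  split; nra.
Qed.

Definition Ff (K t : R) : R := K * cos (K * t) * cos t + sin (K * t) * sin t.

Lemma Ff_cont K : continuity (Ff K).
Proof. unfold Ff. apply derivable_continuous. reg. Qed.

Lemma test : True.
Proof. exact I. Qed.

Lemma alg_xrange K s0 c0 u D b : 0 < K -> 0 < s0 -> 0 < c0 -> 297/100 <= K * s0 -> b = 145/100 ->
  u * (K * s0 * c0) = b -> K * D = u -> 0 < u ->
  c0 * D^2/2 + s0 * D <= 8 / (5 * K^2 * c0).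
Proof.
  intros HK Hs Hc Ks Eb EuP EuK Hu.
  assert (HK2 : 0 < K^2 * c0) by (apply Rmult_lt_0_compat; [apply pow_lt|]; lra).
  assert (E1 : s0 * D * (K^2 * c0) = b) by (rewrite <- EuP, <- EuK; ring).
  assert (E2 : c0 * D^2/2 * (K^2 * c0) = (c0 * u)^2/2) by (rewrite <- EuK; field).
  assert (E3 : (c0 * u) * (K * s0) = b) by (rewrite <- EuP; ring).
  assert (Hcu0 : 0 < c0 * u) by (apply Rmult_lt_0_compat; lra).
  assert (Hcu : c0 * u <= 1/2).
  { apply Rmult_le_reg_r with (K * s0); [lra|]. rewrite E3.
    assert (1/2 * (297/100) <= 1/2 * (K * s0)) by (apply Rmult_le_compat_l; lra). lra. }
  apply Rmult_le_reg_r with (K^2 * c0); [exact HK2|].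
  replace (8 / (5 * K ^ 2 * c0) * (K ^ 2 * c0)) with (8/5) by (field; lra).
  rewrite Rmult_plus_distr_r, E1, E2.
  assert ((c0 * u)^2 <= 1/4) by (simpl; rewrite Rmult_1_r; assert (c0*u*(c0*u) <= (1/2)*(1/2)) by (apply Rmult_le_compat; lra); lra).
  lra.
Qed.

Lemma mul_nonpos a c : 0 <= a -> c <= 0 -> a * c <= 0.
Proof. intros. assert (0 <= a * (- c)) by (apply Rmult_le_pos; lra). lra. Qed.

Lemma alg_bracket K s0 c0 u D b c1 s1 sinu cosu cosD :
  32 <= K -> 0 < s0 -> 0 < c0 -> c0 <= 1 -> 297/100 <= K * s0 -> 4455/1000 <= K * c0 -> b = 145/100 ->
  u * (K * s0 * c0) = b -> K * D = u -> 0 < u -> u <= 73/100 -> 0 < D -> D <= 1/40 ->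
  c1 >= c0 - c0 * D^2/2 - s0 * D -> u - u^3/6 <= sinu -> 0 <= sinu <= 1 ->
  -1 <= cosu <= 1 -> -1 <= cosD <= 1 -> -1 <= s1 <= 1 ->
  K * cosu * cosD - K^2 * s0 * c1 * sinu + c0 * s1 * sinu < 0.
Proof.
  intros HK Hs Hc Hc1 Ks Kc Eb EuP EuK Hu Hu1 HD HD1 Hw Hsu Hsu1 Hcu HcD Hs1.
  assert (HX : 19 <= K^2 * c0^2).
  { replace (K^2 * c0^2) with ((K*c0)*(K*c0)) by ring.
    assert (4455/1000 * (4455/1000) <= (K*c0)*(K*c0)) by (apply Rmult_le_compat; lra). lra. }
  assert (E : s0 * D * (K^2 * c0^2) = b * c0) by (rewrite <- EuP, <- EuK; ring).
  assert (HsD : s0 * D <= c0 * (8/100)).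
  { apply Rmult_le_reg_r with (K^2 * c0^2); [lra|]. rewrite E, Eb.
    assert (c0 * (8/100) * 19 <= c0 * (8/100) * (K^2 * c0^2)) by (apply Rmult_le_compat_l; lra).
    lra. }
  assert (HD2 : D^2 <= 1/1600) by (simpl; rewrite Rmult_1_r; assert (D*D <= (1/40)*(1/40)) by (apply Rmult_le_compat; lra); lra).
  assert (Hc0D : c0 * D^2 <= c0 * (1/1600)) by (apply Rmult_le_compat_l; lra).
  assert (Hw2 : c1 >= c0 * (9/10)) by lra.
  assert (Hu3 : u^2 <= 73/100 * (73/100)) by (simpl; rewrite Rmult_1_r; apply Rmult_le_compat; lra).
  assert (Hsl : 0 <= u - u^3/6).
  { replace (u - u^3/6) with (u * (1 - u^2/6)) by field. apply Rmult_le_pos; lra. }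
  assert (HKs2 : 0 <= K^2 * s0) by (apply Rmult_le_pos; [apply pow_le|]; lra).
  assert (Hm1 : K^2 * s0 * (c0 * (9/10)) * (u - u^3/6) <= K^2 * s0 * c1 * sinu).
  { replace (K^2 * s0 * (c0 * (9/10)) * (u - u^3/6)) with ((K^2 * s0) * ((c0 * (9/10)) * (u - u^3/6))) by ring.
    replace (K^2 * s0 * c1 * sinu) with ((K^2 * s0) * (c1 * sinu)) by ring.
    apply Rmult_le_compat_l; [exact HKs2|].
    apply Rmult_le_compat; try lra. }
  assert (E4 : K^2 * s0 * (c0 * (9/10)) * (u - u^3/6) = K * b * (9/10) * (1 - u^2/6)).
  { rewrite <- EuP. field. }
  assert (H5 : K * 118/100 <= K * b * (9/10) * (1 - u^2/6)).
  { rewrite Eb. replace (K * (145/100) * (9/10) * (1 - u^2/6)) with (K * ((145/100) * (9/10) * (1 - u^2/6))) by ring.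
    replace (K * 118/100) with (K * (118/100)) by field.
    apply Rmult_le_compat_l; lra. }
  assert (Hcc : cosu * cosD <= 1).
  { destruct (Rle_dec 0 cosu); destruct (Rle_dec 0 cosD).
    - assert (cosu * cosD <= 1 * 1) by (apply Rmult_le_compat; lra). lra.
    - assert (cosu * cosD <= 0) by (apply mul_nonpos; lra). lra.
    - assert (cosu * cosD <= 0) by (rewrite Rmult_comm; apply mul_nonpos; lra). lra.
    - assert ((-cosu) * (-cosD) <= 1 * 1) by (apply Rmult_le_compat; lra). lra. }
  assert (Hcs : c0 * s1 * sinu <= 1).
  { assert (c0 * s1 <= 1).
    { destruct (Rle_dec 0 s1).
      - assert (c0 * s1 <= 1 * 1) by (apply Rmult_le_compat; lra). lra.
      - assert (c0 * s1 <= 0) by (apply mul_nonpos; lra). lra. }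
    destruct (Rle_dec 0 (c0 * s1)).
    - assert (c0 * s1 * sinu <= 1 * 1) by (apply Rmult_le_compat; lra). lra.
    - assert (c0 * s1 * sinu <= 0) by (rewrite Rmult_comm; apply mul_nonpos; lra). lra. }
  assert (HKc : K * (cosu * cosD) <= K * 1) by (apply Rmult_le_compat_l; lra).
  replace (K * cosu * cosD) with (K * (cosu * cosD)) by ring. lra.
Qed.

Lemma alg_P K s0 c0 : 0 < s0 -> 0 < c0 -> s0^2 + c0^2 = 1 -> 297/100 <= K * s0 -> 4455/1000 <= K * c0 ->
  2 <= K * s0 * c0.
Proof.
  intros. destruct (Rle_dec s0 c0).
  - assert (c0 >= 7/10) by nra.
    assert (297/100 * (7/10) <= K * s0 * c0) by (apply Rmult_le_compat; lra). lra.
  - assert (s0 >= 7/10) by nra.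
    replace (K * s0 * c0) with ((K * c0) * s0) by ring.
    assert (4455/1000 * (7/10) <= K * c0 * s0) by (apply Rmult_le_compat; lra). lra.
Qed.

Lemma alg_w c0 s0 cD sD D c1 : 0 < c0 -> 0 < s0 -> c1 = c0 * cD - s0 * sD -> 1 - D^2/2 <= cD -> sD < D ->
  c1 >= c0 - c0 * D^2/2 - s0 * D.
Proof.
  intros. assert (c0 * (1 - D^2/2) <= c0 * cD) by (apply Rmult_le_compat_l; lra).
  assert (s0 * sD <= s0 * D) by (apply Rmult_le_compat_l; lra). lra.
Qed.

Lemma core K t0 : 32 <= K -> 0 < t0 -> t0 < PI/2 -> 3 <= K * t0 -> 9/2 <= K * (PI/2 - t0) ->
  sin (K * t0) * cos t0 = K * cos (K * t0) * sin t0 ->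
  exists t, t0 < t /\ cos t0 - 8 / (5 * K^2 * cos t0) <= cos t /\ cos t < cos t0 /\ Ff K t = 0.
Proof.
  intros HK H0 H1 H2 H3 Hr.
  pose proof PI_4. pose proof PI_gt3.
  assert (Hs0 : 0 < sin t0) by (apply sin_gt_0; lra).
  assert (Hc0 : 0 < cos t0) by (apply cos_gt_0; lra).
  assert (Hsc : sin t0^2 + cos t0^2 = 1) by (pose proof (sin2_cos2 t0) as HH; unfold Rsqr in HH; simpl; lra).
  assert (Ks : 99/100 * 3 <= K * sin t0) by (apply Ksin_lb; lra).
  assert (Kc : 99/100 * (9/2) <= K * cos t0).
  { rewrite <- sin_shift. apply Ksin_lb; lra. }
  assert (HP := alg_P K (sin t0) (cos t0) Hs0 Hc0 Hsc ltac:(lra) ltac:(lra)).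
  set (s0 := sin t0) in *. set (c0 := cos t0) in *.
  set (P := K * s0 * c0) in *.
  set (u := 145/100 / P).
  set (D := u / K).
  assert (Hu0 : 0 < u) by (unfold u; apply Rdiv_lt_0_compat; lra).
  assert (Hu1 : u <= 73/100) by (unfold u; apply Rmult_le_reg_r with P; [lra|];
     unfold Rdiv; rewrite Rmult_assoc, Rinv_l; lra).
  assert (HD0 : 0 < D) by (unfold D; apply Rdiv_lt_0_compat; lra).
  assert (HD1 : D <= 1/40) by (unfold D; apply Rmult_le_reg_r with K; [lra|];
     unfold Rdiv; rewrite Rmult_assoc, Rinv_l; lra).
  assert (EuK : K * D = u) by (unfold D; field; lra).
  assert (EuP : u * P = 145/100) by (unfold u; field; lra).
  assert (EP : P = K * s0 * c0) by reflexivity.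
  clearbody D u P. subst P.
  set (t1 := t0 + D).
  assert (HcD := cos_quad D ltac:(lra) ltac:(lra)).
  assert (HsD := sin_lt_x D HD0).
  assert (HsD0 : 0 <= sin D) by (apply sin_ge_0; lra).
  assert (HcD1 := COS_bound D).
  assert (Ec1 : cos t1 = c0 * cos D - s0 * sin D) by (unfold t1, c0, s0; apply cos_plus).
  assert (Es1 : sin t1 = s0 * cos D + c0 * sin D) by (unfold t1, c0, s0; apply sin_plus).
  assert (HcDD : cos D = cos t1 * c0 + sin t1 * s0).
  { rewrite Ec1, Es1. transitivity (cos D * (s0^2 + c0^2)); [rewrite Hsc; ring | ring]. }
  assert (Hw := alg_w c0 s0 (cos D) (sin D) D (cos t1) Hc0 Hs0 Ec1 HcD HsD).
  assert (Hx : c0 - 8 / (5 * K^2 * c0) <= cos t1).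
  { assert (c0 * D^2/2 + s0 * D <= 8 / (5 * K^2 * c0)); [|lra].
    apply (alg_xrange K s0 c0 u D (145/100)); auto; lra. }
  assert (Hsu := sin_cubic u ltac:(lra) ltac:(lra)).
  assert (Hsu0 : 0 <= sin u) by (apply sin_ge_0; lra).
  assert (Hsu1 := SIN_bound u). assert (Hcu1 := COS_bound u).
  assert (Hs1 := SIN_bound t1).
  assert (Hc01 : c0 <= 1) by (apply COS_bound).
  assert (Hbr : K * cos u * cos D - K^2 * s0 * cos t1 * sin u + c0 * sin t1 * sin u < 0).
  { apply (alg_bracket K s0 c0 u D (145/100)); auto; lra. }
  set (S0 := sin (K * t0)) in *. set (C0 := cos (K * t0)) in *.
  assert (HC0 : C0 <> 0).
  { intro HC. rewrite HC in Hr. rewrite Rmult_0_r, Rmult_0_l in Hr.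
    assert (HS0 : S0 = 0). { apply Rmult_eq_reg_r with c0; lra. }
    assert (HSC := sin2_cos2 (K * t0)). fold S0 C0 in HSC. unfold Rsqr in HSC.
    rewrite HS0, HC in HSC. lra. }
  assert (F0 : c0 * Ff K t0 = K * C0).
  { unfold Ff. fold S0 C0 c0 s0.
    replace (c0 * (K * C0 * c0 + S0 * s0)) with (K * C0 * c0^2 + (S0 * c0) * s0) by ring.
    rewrite Hr. replace (K * C0 * c0 ^ 2 + K * C0 * s0 * s0) with (K * C0 * (s0^2 + c0^2)) by ring.
    rewrite Hsc. ring. }
  assert (F1 : c0 * Ff K t1 = C0 * (K * cos u * cos D - K^2 * s0 * cos t1 * sin u + c0 * sin t1 * sin u)).
  { unfold Ff.
    replace (K * t1) with (K * t0 + u) by (unfold t1; rewrite <- EuK; ring).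
    rewrite cos_plus, sin_plus. fold S0 C0. rewrite HcDD.
    transitivity (C0 * (K * cos u * (cos t1 * c0 + sin t1 * s0) - K ^ 2 * s0 * cos t1 * sin u + c0 * sin t1 * sin u)
       + (S0 * c0 - K * C0 * s0) * (- K * sin u * cos t1 + cos u * sin t1)); [ring|].
    rewrite Hr. ring. }
  set (Br := K * cos u * cos D - K^2 * s0 * cos t1 * sin u + c0 * sin t1 * sin u) in *.
  assert (Hprod : Ff K t0 * Ff K t1 < 0).
  { assert (Hm : (c0 * Ff K t0) * (c0 * Ff K t1) < 0).
    { rewrite F0, F1. assert (0 < C0^2) by (assert (HH := Rsqr_pos_lt C0 HC0); unfold Rsqr in HH; simpl; lra).
      replace (K * C0 * (C0 * Br)) with ((K * C0^2) * Br) by ring.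
      assert (0 < K * C0^2) by (apply Rmult_lt_0_compat; lra).
      assert (0 < (K * C0^2) * (- Br)) by (apply Rmult_lt_0_compat; lra). lra. }
    replace ((c0 * Ff K t0) * (c0 * Ff K t1)) with ((c0 * c0) * (Ff K t0 * Ff K t1)) in Hm by ring.
    destruct (Rlt_dec (Ff K t0 * Ff K t1) 0) as [h|h]; [exact h|].
    assert (0 <= (c0 * c0) * (Ff K t0 * Ff K t1)) by (apply Rmult_le_pos; [apply Rmult_le_pos|]; lra). lra. }
  clearbody Br.
  assert (Ht01 : t0 < t1) by (unfold t1; lra).
  assert (Hex : exists t, t0 <= t <= t1 /\ Ff K t = 0).
  { destruct (Rlt_dec (Ff K t0) 0) as [Hn|Hn].
    - assert (0 < Ff K t1).
      { destruct (Rle_dec (Ff K t1) 0); [|lra].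
        assert (0 <= (- Ff K t0) * (- Ff K t1)) by (apply Rmult_le_pos; lra). lra. }
      destruct (IVT (Ff K) t0 t1 (Ff_cont K) Ht01 Hn H5) as [t Ht]. exists t; exact Ht.
    - assert (0 < Ff K t0) by (destruct (Req_dec (Ff K t0) 0) as [e|e]; [rewrite e in Hprod; lra|lra]).
      assert (Ff K t1 < 0).
      { destruct (Rle_dec 0 (Ff K t1)); [|lra].
        assert (0 <= (Ff K t0) * (Ff K t1)) by (apply Rmult_le_pos; lra). lra. }
      destruct (IVT (fun t => - Ff K t) t0 t1 (continuity_opp _ (Ff_cont K)) Ht01 ltac:(lra) ltac:(lra)) as [t Ht].
      exists t; split; [apply Ht|]. destruct Ht as [_ Ht]. lra. }
  destruct Hex as [t [[Ht1 Ht2] Ht]].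
  assert (Hne : t <> t0).
  { intro e. subst t. rewrite Ht in Hprod. lra. }
  exists t. split; [lra|]. split; [|split; [|exact Ht]].
  - destruct (Req_dec t t1) as [e|e]; [subst t; lra|].
    assert (cos t1 < cos t) by (apply cos_decreasing_1; unfold t1 in *; lra). lra.
  - unfold c0. apply cos_decreasing_1; unfold t1 in *; lra.
Qed.

Lemma root_dU2 j z : is_root_dU (S j) z -> dU2 (S j) z = 0.
Proof.
  intros H. unfold is_root_dU in H. rewrite chebU_eq in H.
  destruct (U2_deriv (S j) z) as [H1 _].
  symmetry. exact (uniqueness_limite _ _ _ _ H H1).
Qed.

Lemma root_lt1 j z : is_root_dU (S j) z -> z < 1.
Proof.
  intros H. apply root_dU2 in H. destruct (Rlt_dec z 1) as [h|h]; [exact h|].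
  assert (0 < dU2 (S j) z) by (apply dU2_pos; lra). lra.
Qed.

Lemma acos_range x : 0 < x < 1 -> 0 < acos x < PI/2 /\ cos (acos x) = x.
Proof.
  intros Hx. assert (Hc := cos_acos x ltac:(lra)).
  assert (Hb := acos_bound_lt x ltac:(lra)). pose proof PI_RGT_0.
  split; [|exact Hc]. split; [lra|].
  destruct (Rlt_dec (acos x) (PI/2)) as [h|h]; [exact h|].
  destruct (Req_dec (acos x) (PI/2)) as [e|e].
  - rewrite e, cos_PI2 in Hc. lra.
  - assert (cos (acos x) < cos (PI/2)) by (apply cos_decreasing_1; lra).
    rewrite cos_PI2 in H0. lra.
Qed.

Lemma trig_root j t : 0 < t < PI -> dU2 (S j) (cos t) = 0 ->
  sin ((INR j + 2) * t) * cos t = (INR j + 2) * cos ((INR j + 2) * t) * sin t.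
Proof.
  intros Ht H0. destruct (dU2_identity j (cos t)) as [Hid _].
  rewrite H0, Rmult_0_r in Hid.
  destruct (U2_cos j t) as [E1 E2].
  set (K := INR j + 2) in *.
  assert (Hs : 0 < sin t) by (apply sin_gt_0; lra).
  assert (Hm : 0 = K * (U2 j (cos t) * sin t) - (INR j + 1) * cos t * (U2 (S j) (cos t) * sin t)).
  { replace 0 with (0 * sin t) by ring. rewrite Hid. ring. }
  rewrite E1, E2 in Hm.
  replace (INR j + 1) with (K - 1) in Hm by (unfold K; ring).
  replace ((K - 1) * t) with (K * t - t) in Hm by ring.
  rewrite sin_minus in Hm. lra.
Qed.

Lemma Rpoly_Ff n t : (1 <= n)%nat -> Rpoly n (cos t) = 2 * Ff (2 * INR n) t.
Proof.
  intros Hn. unfold Rpoly, Ff. rewrite !chebT_cos.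
  rewrite plus_INR, minus_INR by lia. rewrite mult_INR. simpl (INR 2). simpl (INR 1).
  replace ((1 + 1) * INR n + 1) with (2 * INR n + 1) by ring.
  replace ((1 + 1) * INR n - 1) with (2 * INR n - 1) by ring.
  replace ((2 * INR n + 1) * t) with (2 * INR n * t + t) by ring.
  replace ((2 * INR n - 1) * t) with (2 * INR n * t - t) by ring.
  rewrite cos_plus, cos_minus. ring.
Qed.

Theorem mainTheorem5 :
  exists N : nat, forall n : nat, (N <= n)%nat ->
    forall zeta : R,
      0 < zeta -> is_root_dU (2 * n - 1) zeta ->
      (exists z0 : R, 0 < z0 < zeta /\ is_root_dU (2 * n - 1) z0) ->
      exists x : R,
        zeta - 2 / (5 * INR n ^ 2 * zeta) <= x < zeta /\ Rpoly n x = 0.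
Proof.
  exists 16%nat. intros n Hn zeta Hz Hroot [z0 [Hz0 Hroot0]].
  destruct n as [|p]; [lia|].
  replace (2 * S p - 1)%nat with (S (2 * p)) in Hroot, Hroot0 by lia.
  assert (Hz1 := root_lt1 _ _ Hroot).
  destruct (acos_range zeta ltac:(lra)) as [Ht0 Ec0].
  destruct (acos_range z0 ltac:(lra)) as [Htz Ecz].
  set (t0 := acos zeta) in *. set (tz := acos z0) in *.
  assert (Htz0 : t0 < tz).
  { destruct (Rlt_dec t0 tz) as [h|h]; [exact h|].
    destruct (Req_dec t0 tz) as [e|e].
    - rewrite e in Ec0. lra.
    - assert (cos t0 < cos tz) by (apply cos_decreasing_1; lra). lra. }
  pose proof PI_RGT_0.
  assert (R0 := trig_root (2 * p) t0 ltac:(lra) ltac:(rewrite Ec0; apply root_dU2; exact Hroot)).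
  assert (Rz := trig_root (2 * p) tz ltac:(lra) ltac:(rewrite Ecz; apply root_dU2; exact Hroot0)).
  assert (EK : INR (2 * p) + 2 = 2 * INR (S p)) by (rewrite mult_INR, (S_INR p); replace (INR 2) with 2 by (simpl; lra); lra).
  rewrite EK in R0, Rz.
  assert (Hn' : 16 <= INR (S p)) by (replace 16 with (INR 16) by (simpl; ring); apply le_INR; lia).
  destruct (root_bounds (S p) (2 * INR (S p)) t0 tz eq_refl ltac:(lra) ltac:(lra) Htz0 ltac:(lra) R0 Rz) as [B1 B2].
  pose proof PI_gt3.
  destruct (core (2 * INR (S p)) t0 ltac:(lra) ltac:(lra) ltac:(lra) ltac:(lra) ltac:(lra) R0)
    as [t [Htt [Hlo [Hhi HF]]]].
  exists (cos t). rewrite Ec0 in Hlo, Hhi. split; [split|].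
  - replace (2 / (5 * INR (S p) ^ 2 * zeta)) with (8 / (5 * (2 * INR (S p)) ^ 2 * zeta)) by (field; lra).
    exact Hlo.
  - exact Hhi.
  - rewrite Rpoly_Ff by lia. rewrite HF. ring.
Qed.
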